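(* Let $j\in\mathbb Z$, let $\sigma$ be a $2$-cell of $X_j$ with vertical $1$-cells $e_1,e_2$. If $\bar\sigma_1,\dots,\bar\sigma_\ell$ are $2$-cells of $X_{j+1}$ contained in $\pi_j(\sigma)$ forming a chain (consecutive ones intersect) that joins $\pi_j(e_1)$ to $\pi_j(e_2)$ (i.e. $\bar\sigma_1\cap\pi_j(e_1)\ne\emptyset$ and $\bar\sigma_\ell\cap\pi_j(e_2)\ne\emptyset$), then $\ell\ge m$.
   Context: Standing construction ($n=2$). Fix an integer $L\ge100$, $m=4$, $m_v=3L$. For $j\in\mathbb Z$, $Y_j$ is the cell complex on $\mathbb R^2$ given by the tiling by rectangles $[am^{-j},(a+1)m^{-j}]\times[bm_v^{-j},(b+1)m_v^{-j}]$, $a,b\in\mathbb Z$; a $1$-cell is vertical if it is a translate of $\{0\}\times[0,m_v^{-j}]$. Let $\Phi(x,y)=(m^{-1}x,m_v^{-1}y)$. For $k,\ell\in\mathbb Z$, $i\in\{1,2,3\}$, $a_{k,\ell,i}=\{k+\tfrac i4\}\times[(3\ell+i-1)m_v^{-1},(3\ell+i)m_v^{-1}]$. $\mathcal R$ is the equivalence relation on $\mathbb R^2$ generated by $p\sim p+(0,m_v^{-1})$ for $p\in a_{k,\ell,i}$. $\Phi^j_*\mathcal R=\{(\Phi^jp,\Phi^jq):(p,q)\in\mathcal R\}$; $\mathcal R_j$ is generated by $\Phi^i_*\mathcal R$, $i<j$. $X_j=\mathbb R^2/\mathcal R_j$, $\hat\pi^j$ the quotient map, $\pi_j:X_j\to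 X_{j+1}$ the induced map; $X_j$ has the CW structure whose open cells are images of open cells of $Y_j$, with vertical cells being images of vertical cells. *)

(* Defs.v *)
From Stdlib Require Import Reals ZArith.
Open Scope R_scope.

Definition m : nat := 4.
Definition mv (L : nat) : R := 3 * INR L.

Definition pt : Type := (R * R)%type.

Definition in_a (L : nat) (k l : Z) (i : nat) (p : pt) : Prop :=
  fst p = IZR k + INR i / INR m /\
  (3 * IZR l + INR i - 1) / mv L <= snd p <= (3 * IZR l + INR i) / mv L.

Definition Rgen (L : nat) (p q : pt) : Prop :=
  exists (k l : Z) (i : nat), (1 <= i <= 3)%nat /\ in_a L k l i p /\
    q = (fst p, snd p + / mv L).

Inductive eq_closure {A : Type} (S : A -> A -> Prop) : A -> A -> Prop :=
| ec_base x y : S x y -> eq_closure S x y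
| ec_refl x : eq_closure S x x
| ec_sym x y : eq_closure S x y -> eq_closure S y x
| ec_trans x y z : eq_closure S x y -> eq_closure S y z -> eq_closure S x z.

Definition Rrel (L : nat) : pt -> pt -> Prop := eq_closure (Rgen L).

Definition Phi_pow (L : nat) (i : Z) (p : pt) : pt :=
  (powerRZ (INR m) (- i) * fst p, powerRZ (mv L) (- i) * snd p).

Definition push (L : nat) (i : Z) (Rel : pt -> pt -> Prop) (p q : pt) : Prop :=
  exists p0 q0, Rel p0 q0 /\ p = Phi_pow L i p0 /\ q = Phi_pow L i q0.

Definition Rj (L : nat) (j : Z) : pt -> pt -> Prop :=
  eq_closure (fun p q => exists i : Z, (i < j)%Z /\ push L i (Rrel L) p q).

Definition Xj (L : nat) (j : Z) : Type :=
  { S : pt -> Prop | exists p, S = Rj L j p }.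

Definition hatpi (L : nat) (j : Z) (p : pt) : Xj L j :=
  exist _ (Rj L j p) (ex_intro _ p eq_refl).

Definition image (L : nat) (j : Z) (A : pt -> Prop) : Xj L j -> Prop :=
  fun x => exists p, A p /\ hatpi L j p = x.

Definition Yrect (L : nat) (j a b : Z) (p : pt) : Prop :=
  IZR a * powerRZ (INR m) (- j) <= fst p <= (IZR a + 1) * powerRZ (INR m) (- j) /\
  IZR b * powerRZ (mv L) (- j) <= snd p <= (IZR b + 1) * powerRZ (mv L) (- j).

Definition Yvert (L : nat) (j a b : Z) (p : pt) : Prop :=
  fst p = IZR a * powerRZ (INR m) (- j) /\
  IZR b * powerRZ (mv L) (- j) <= snd p <= (IZR b + 1) * powerRZ (mv L) (- j).

Definition cell2 (L : nat) (j a b : Z) : Xj L j -> Prop := image L j (Yrect L j a b).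
Definition vcell (L : nat) (j a b : Z) : Xj L j -> Prop := image L j (Yvert L j a b).

Definition is_2cell (L : nat) (j : Z) (S : Xj L j -> Prop) : Prop :=
  exists a b, S = cell2 L j a b.

(* image of a subset of X_j under the induced map pi_j : X_j -> X_{j+1}
   (pi_j (hatpi^j p) = hatpi^{j+1} p) *)
Definition pi_img (L : nat) (j : Z) (A : Xj L j -> Prop) : Xj L (j + 1) -> Prop :=
  fun y => exists x, A x /\ exists p, hatpi L j p = x /\ hatpi L (j + 1) p = y.

(* Main.v *)
Require Import Defs.
From Stdlib Require Import Reals ZArith Lra Lia.
Open Scope R_scope.

Lemma ec_fst (S : pt -> pt -> Prop) :
  (forall x y, S x y -> fst x = fst y) -> forall x y, eq_closure S x y -> fst x = fst y.
Proof. intros HS x y H; induction H; auto; congruence. Qed.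

Lemma Rj_fst L j p q : Rj L j p q -> fst p = fst q.
Proof.
  apply ec_fst. intros x y [i [_ [p0 [q0 [H [-> ->]]]]]].
  simpl. f_equal. revert H. apply ec_fst.
  intros u v [k [l [i' [_ [_ ->]]]]]. reflexivity.
Qed.

Lemma hatpi_fst L j p q : hatpi L j p = hatpi L j q -> fst p = fst q.
Proof.
  intro H. apply (Rj_fst L j).
  assert (E : Rj L j p = Rj L j q) by (apply (f_equal (@proj1_sig _ _)) in H; exact H).
  rewrite E. apply ec_refl.
Qed.

Lemma cell_fst L j a b y p : cell2 L j a b y -> hatpi L j p = y ->
  IZR a * powerRZ (INR m) (- j) <= fst p <= (IZR a + 1) * powerRZ (INR m) (- j).
Proof.
  intros [p' [[Hr _] Hp']] Hp. subst y. apply hatpi_fst in Hp. rewrite Hp. exact Hr.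
Qed.

Lemma wpos j : 0 < powerRZ (INR m) j.
Proof. apply powerRZ_lt. unfold m; simpl; lra. Qed.

Lemma Wrel j : powerRZ (INR m) (- j) = 4 * powerRZ (INR m) (- (j + 1)).
Proof.
  replace (- j)%Z with (- (j+1) + 1)%Z by lia.
  rewrite powerRZ_add by (unfold m; simpl; lra).
  simpl. unfold m; simpl. lra.
Qed.

Lemma leZ_from a c w t : 0 < w -> IZR a * w <= t -> t <= (IZR c) * w -> (a <= c)%Z.
Proof.
  intros hw h1 h2. apply le_IZR. apply (Rmult_le_reg_r w); lra.
Qed.

Lemma adj L j a b a' b' y : cell2 L j a b y -> cell2 L j a' b' y -> (a <= a' + 1)%Z.
Proof.
  intros H1 H2. destruct H1 as [p [Hr Hp]].
  pose proof (cell_fst L j a b y p (ex_intro _ p (conj Hr Hp)) Hp) as [h1 _].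
  pose proof (cell_fst L j a' b' y p H2 Hp) as [_ h2].
  apply (leZ_from a (a'+1) (powerRZ (INR m) (- j)) (fst p)); auto using wpos.
  rewrite plus_IZR; change (IZR 1) with 1; exact h2.
Qed.

Lemma endp L j a b a' b' y : pi_img L j (vcell L j a b) y -> cell2 L (j+1) a' b' y ->
  (a' <= 4 * a)%Z /\ (4 * a <= a' + 1)%Z.
Proof.
  intros [x [[p' [[Hv _] Hp']] [p [Hp Hy]]]] Hc.
  subst x. apply hatpi_fst in Hp. rewrite Wrel in Hv.
  pose proof (cell_fst L (j+1) a' b' y p Hc Hy) as [h1 h2].
  pose proof (wpos (- (j+1))) as hw.
  assert (Hf : fst p = 4 * (IZR a * powerRZ (INR m) (- (j+1)))) by (rewrite Hp, Hv; ring).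
  split.
  - apply (leZ_from a' (4*a) (powerRZ (INR m) (- (j+1))) (fst p)); auto.
    rewrite mult_IZR; change (IZR 4) with 4; nra.
  - apply (leZ_from (4*a) (a'+1) (powerRZ (INR m) (- (j+1))) (fst p)); auto.
    + rewrite mult_IZR; change (IZR 4) with 4; nra.
    + rewrite plus_IZR; change (IZR 1) with 1; nra.
Qed.

Theorem mainTheorem7 (L : nat) (j : Z) (a b : Z)
  (sigma e1 e2 : Xj L j -> Prop) (ell : nat) (sb : nat -> Xj L (j + 1) -> Prop) :
  (100 <= L)%nat ->
  sigma = cell2 L j a b ->
  ((e1 = vcell L j a b /\ e2 = vcell L j (a + 1) b) \/
   (e1 = vcell L j (a + 1) b /\ e2 = vcell L j a b)) ->
  (1 <= ell)%nat ->
  (forall i, (i < ell)%nat -> is_2cell L (j + 1) (sb i)) ->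
  (forall i, (i < ell)%nat -> forall y, sb i y -> pi_img L j sigma y) ->
  (forall i, (i + 1 < ell)%nat -> exists y, sb i y /\ sb (i + 1)%nat y) ->
  (exists y, sb 0%nat y /\ pi_img L j e1 y) ->
  (exists y, sb (ell - 1)%nat y /\ pi_img L j e2 y) ->
  (m <= ell)%nat.
Proof.
  intros _ _ He Hell Hcell _ Hchain [y0 [Hy0 He1]] [yl [Hyl He2]].
  destruct (Hcell 0%nat ltac:(lia)) as [a0 [b0 E0]].
  assert (K : forall k, (k < ell)%nat -> exists a' b', sb k = cell2 L (j+1) a' b' /\
             (Z.abs (a' - a0) <= Z.of_nat k)%Z).
  { induction k as [|k IH]; intros Hk.
    - exists a0, b0. split; [exact E0|]. rewrite Z.sub_diag. simpl. lia.
    - destruct (IH ltac:(lia)) as [ak [bk [Ek Hk']]].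
      destruct (Hcell (S k) Hk) as [a1 [b1 E1]].
      destruct (Hchain k ltac:(lia)) as [y [H1 H2]].
      replace (k + 1)%nat with (S k) in H2 by lia.
      rewrite Ek in H1. rewrite E1 in H2.
      pose proof (adj _ _ _ _ _ _ _ H1 H2). pose proof (adj _ _ _ _ _ _ _ H2 H1).
      exists a1, b1. split; [exact E1|]. lia. }
  destruct (K (ell - 1)%nat ltac:(lia)) as [al [bl [El Hal]]].
  rewrite E0 in Hy0. rewrite El in Hyl.
  unfold m.
  destruct He as [[-> ->] | [-> ->]].
  - pose proof (endp _ _ _ _ _ _ _ He1 Hy0). pose proof (endp _ _ _ _ _ _ _ He2 Hyl). lia.
  - pose proof (endp _ _ _ _ _ _ _ He1 Hy0). pose proof (endp _ _ _ _ _ _ _ He2 Hyl). lia.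
Qed.
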